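(* There exists an absolute constant $c>0$ such that the following holds. Let $n\in\mathbb{N}$, let $0\le\alpha\le1$, and let $S\subseteq\mathbb{F}_2^n$ with $|S|\ge\alpha 2^n$. Then $\rho(S)\ge c\,\alpha^{1/2}n^{1/2}$.
   Context: For $x,y\in\mathbb{F}_2^n$, the Hamming distance is $d_H(x,y)=\#\{i:x_i\neq y_i\}$. A set $R\subseteq\mathbb{F}_2^n$ is called rainbow if the $\binom{|R|}{2}$ Hamming distances $d_H(x,y)$ over unordered pairs of distinct points $x,y\in R$ are pairwise distinct. $\rho(S)$ denotes the maximum size of a rainbow subset $R\subseteq S$. *)

(* Defs.v *)
From mathcomp Require Import all_boot.
From Stdlib Require Import Reals.
Set Implicit Arguments. Unset Strict Implicit. Unset Printing Implicit Defensive.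

Definition F2n (n : nat) := {ffun 'I_n -> bool}.

Definition dH (n : nat) (x y : F2n n) : nat := #|[set i : 'I_n | x i != y i]|.

(* R is rainbow: distinct unordered pairs of distinct points have distinct
   distances.  Unordered pairs {x,y} and {u,v} are compared as sets. *)
Definition rainbow (n : nat) (R : {set F2n n}) : bool :=
  [forall x in R, forall y in R, forall u in R, forall v in R,
    ((x != y) && (u != v) && (dH x y == dH u v)) ==>
    ([set x; y] == [set u; v])].

Definition rho (n : nat) (S : {set F2n n}) : nat :=
  \max_(R : {set F2n n} | (R \subset S) && rainbow R) #|R|.

(* Main.v *)
Require Import Defs.
From mathcomp Require Import all_boot all_algebra all_field.
From mathcomp Require Import zify ring.
Set Implicit Arguments. Unset Strict Implicit.
Import GRing.Theory.

Lemma pow2_gt0 k : 0 < 2^k. Proof. by rewrite expn_gt0. Qed.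

Definition bitn k (b : F2n k) (i : nat) : bool :=
  if @insub _ (fun i => i < k) 'I_k i is Some j then b j else false.

Definition phi k n (b : F2n k) : F2n n := [ffun j : 'I_n => bitn b (trunc_log 2 j.+1)].

Lemma blocks K (f : nat -> nat) :
  \sum_(0 <= j < 2^K - 1) f (trunc_log 2 j.+1) = \sum_(i < K) 2^i * f i.
Proof.
elim: K => [|K IH]; first by rewrite expn0 subnn big_geq // big_ord0.
have hK : 2^K - 1 <= 2^K.+1 - 1 by rewrite expnS; have := pow2_gt0 K; lia.
rewrite (@big_cat_nat _ _ _ (2^K - 1) 0 _ _ _ (leq0n _) hK) /= IH big_ord_recr /=; congr (_ + _).
rewrite (eq_big_nat _ _ (F2 := fun _ => f K)); last first.
  move=> j /andP[h1 h2]; rewrite (@trunc_log_eq 2 K) //.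
  have := pow2_gt0 K; rewrite expnS in h2 *; lia.
rewrite sum_nat_const_nat expnS; have := pow2_gt0 K => hp; congr (_ * _); lia.
Qed.

Lemma bitn_out k (b : F2n k) i : k <= i -> bitn b i = false.
Proof. by move=> h; rewrite /bitn insubN // -leqNgt. Qed.

Lemma bitn_in k (b : F2n k) (i : 'I_k) : bitn b i = b i.
Proof. by rewrite /bitn insubT //= => ?; congr (b _); apply: val_inj. Qed.

Lemma dH_phi k n (b b' : F2n k) : 2^k - 1 <= n ->
  dH (phi n b) (phi n b') = \sum_(i < k) 2^i * (bitn b i != bitn b' i).
Proof.
move=> hn; rewrite /dH -sum1_card big_mkcond /=.
rewrite (eq_bigr (fun j : 'I_n => nat_of_bool (bitn b (trunc_log 2 (val j).+1) != bitn b' (trunc_log 2 (val j).+1)))); last first.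
  by move=> j _; rewrite inE !ffunE; case: (_ != _).
rewrite -(big_mkord xpredT (fun j => nat_of_bool (bitn b (trunc_log 2 j.+1) != bitn b' (trunc_log 2 j.+1)))).
rewrite (@big_cat_nat _ _ _ (2^k - 1) 0 _ _ _ (leq0n _) hn) /=.
rewrite [X in _ + X]big1_seq ?addn0.
  rewrite (blocks k (fun i => nat_of_bool (bitn b i != bitn b' i))).
  done.
move=> j /andP[_]; rewrite mem_index_iota => /andP[h1 _].
have hk : k <= trunc_log 2 j.+1.
  apply: trunc_log_max => //; have := pow2_gt0 k; lia.
by rewrite !bitn_out.
Qed.

Lemma wsum_lt K (c : nat -> bool) : \sum_(i < K) 2^i * c i < 2^K.
Proof.
elim: K => [|K IH]; first by rewrite big_ord0.
move: IH; rewrite big_ord_recr /= expnS; set s := \sum_(i < K) _ => IH; case: (c K) => /=; lia.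
Qed.

Lemma wsum_inj K (c c' : nat -> bool) :
  \sum_(i < K) 2^i * c i = \sum_(i < K) 2^i * c' i -> forall i, i < K -> c i = c' i.
Proof.
elim: K => [|K IH] //.
rewrite !big_ord_recr /= => e.
have h1 := wsum_lt K c; have h2 := wsum_lt K c'.
move: e h1 h2; set s1 := \sum_(i < K) _; set s2 := \sum_(i < K) _ => e h1 h2.
have ecK : c K = c' K.
  move: e; case: (c K); case: (c' K) => //=; lia.
move: e; rewrite ecK => /addIn e i; rewrite ltnS leq_eqVlt => /orP[/eqP -> //|].
exact: IH.
Qed.

Definition sidon k (T : {set F2n k}) := forall b1 b2 b3 b4, b1 \in T -> b2 \in T ->
  b3 \in T -> b4 \in T -> b1 != b2 -> b3 != b4 ->
  (forall i, (b1 i != b2 i) = (b3 i != b4 i)) -> (b3 = b1 /\ b4 = b2) \/ (b3 = b2 /\ b4 = b1).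

Section Avg.
Lemma avg_exists (I : finType) (i0 : I) (f : I -> nat) :
  exists i, \sum_j f j <= #|I| * f i.
Proof.
have hI : 0 < #|I| by apply/card_gt0P; exists i0.
have [i hi] := @eq_bigmax I f hI.
exists i; rewrite -hi -sum_nat_const.
by apply: leq_sum => j _; exact: leq_bigmax.
Qed.
End Avg.

Section Cube.
Local Open Scope ring_scope.
Variable F : fieldType.
Hypothesis h2 : (2%:R : F) = 0.

Lemma addxx (x : F) : x + x = 0.
Proof. by rewrite -mulr2n -mulr_natr h2 mulr0. Qed.

Lemma oppE (x : F) : - x = x.
Proof. by apply/eqP; rewrite eq_sym -subr_eq0 opprK addxx. Qed.

Lemma sum0E (x y : F) : (x + y == 0) = (x == y).
Proof. by rewrite -{1}(oppE y) subr_eq0. Qed.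

Lemma cube_sidon (x1 x2 x3 x4 : F) : x1 != x2 -> x1 + x2 = x3 + x4 ->
  x1 ^+ 3 + x2 ^+ 3 = x3 ^+ 3 + x4 ^+ 3 ->
  (x3 = x1 /\ x4 = x2) \/ (x3 = x2 /\ x4 = x1).
Proof.
move=> n12 hs hc.
have e3 : (3%:R : F) = 1 by rewrite (natrD _ 1 2) h2 addr0.
have hp : x1 * x2 = x3 * x4.
  have a0 : x1 + x2 != 0 by rewrite sum0E.
  have : (x1 + x2) * (x1 * x2 - x3 * x4) = 0.
    have -> : (x1 + x2) * (x1 * x2 - x3 * x4) =
      (3%:R * (x1+x2) * x1 * x2 - 3%:R * (x3 + x4) * x3 * x4)
      - 2%:R * ((x1 + x2) * (x1 * x2 - x3 * x4)) by rewrite -hs; ring.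
    have -> : 3%:R * (x1+x2) * x1 * x2 - 3%:R * (x3 + x4) * x3 * x4
      = ((x1+x2)^+3 - (x3+x4)^+3) - ((x1 ^+ 3 + x2 ^+ 3) - (x3 ^+ 3 + x4 ^+ 3)) by ring.
    by rewrite hc hs h2 !subrr mul0r subr0.
  by move/eqP; rewrite mulf_eq0 (negbTE a0) /= subr_eq0 => /eqP.
have : (x3 - x1) * (x3 - x2) = 0.
  have -> : (x3 - x1) * (x3 - x2) = x3 ^+ 2 - (x1 + x2) * x3 + x1 * x2 by ring.
  by rewrite hs hp; ring.
move/eqP; rewrite mulf_eq0 !subr_eq0 => /orP[] /eqP e.
  left; split => //; subst x3.
  by apply: (addrI x1); rewrite -hs.
right; split => //; subst x3.
by apply: (addrI x2); rewrite -hs addrC.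
Qed.
End Cube.

Section Pair.
Variable F : finFieldType.
Local Open Scope ring_scope.
Hypothesis h2 : (2%:R : F) = 0.
Let V := (F * F)%type.
Lemma addVV (v : V) : v + v = 0.
Proof.
case: v => x y.
have -> : (x, y) + (x, y) = (x + x, y + y) by [].
by rewrite !addxx.
Qed.

Variable k : nat.
Definition lin (a : {ffun 'I_k -> V}) (c : F2n k) : V := \sum_(i | c i) a i.

Lemma lin_xor a (b1 b2 : F2n k) : lin a b1 + lin a b2 = \sum_(i | b1 i != b2 i) a i.
Proof.
rewrite /lin big_mkcond [X in _ + X]big_mkcond [RHS]big_mkcond -big_split /=.
apply: eq_bigr => i _; case: (b1 i); case: (b2 i) => /=; rewrite ?addr0 ?add0r //.
exact: addVV.
Qed.

Definition P : {set V} := [set (x, x ^+ 3) | x : F].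

Lemma card_P : #|P| = #|F|.
Proof. by rewrite card_imset // => x y [] . Qed.


Variable B : {set F2n k}.
Definition uniqB a b := [forall b' in B, (lin a b' == lin a b) ==> (b' == b)].
Definition Tset a u := [set b in B | (lin a b + u \in P) && uniqB a b].

Lemma uniq_eq a b b' : uniqB a b -> b' \in B -> lin a b' = lin a b -> b' = b.
Proof. by move=> /forallP /(_ b') hu hb e; move: hu; rewrite hb e eqxx /= => /eqP. Qed.

Lemma Tset_sidon a u : sidon (Tset a u).
Proof.
move=> b1 b2 b3 b4; rewrite !inE => /and3P[B1 P1 U1] /and3P[B2 P2 U2] /and3P[B3 P3 U3] /and3P[B4 P4 U4] n12 n34 hb.
have hl : lin a b1 + lin a b2 = lin a b3 + lin a b4.
  by rewrite !lin_xor; apply: eq_bigl => i; exact: hb.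
have ln12 : lin a b1 != lin a b2.
  by apply: contra n12 => /eqP e; rewrite eq_sym; apply/eqP; apply: (uniq_eq U1).
move/imsetP: P1 => [x1 _ e1]; move/imsetP: P2 => [x2 _ e2].
move/imsetP: P3 => [x3 _ e3]; move/imsetP: P4 => [x4 _ e4].
have hp : forall l l' : V, l + l' = (l + u) + (l' + u).
  by move=> l l'; rewrite addrACA addVV addr0.
move: hl; rewrite (hp (lin a b1)) (hp (lin a b3)) e1 e2 e3 e4.
have -> : forall y z : F, (y, y ^+ 3) + (z, z ^+ 3) = (y + z, y ^+ 3 + z ^+ 3) by [].
case=> hs hc.
have n12' : x1 != x2.
  apply: contra ln12 => /eqP e; apply/eqP; apply: (addIr u); by rewrite e1 e2 e.
have ru : forall l l' : V, l + u = l' + u -> l = l' by move=> l l'; exact: addIr.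
case: (cube_sidon h2 n12' hs hc) => [[ex3 ex4]|[ex3 ex4]]; [left|right]; split.
- by apply: (uniq_eq U1 B3); apply: ru; rewrite e1 e3 ex3.
- by apply: (uniq_eq U2 B4); apply: ru; rewrite e2 e4 ex4.
- by apply: (uniq_eq U2 B3); apply: ru; rewrite e2 e3 ex3.
- by apply: (uniq_eq U1 B4); apply: ru; rewrite e1 e4 ex4.
Qed.

Lemma oppV (v : V) : - v = v.
Proof. by apply/eqP; rewrite eq_sym -addr_eq0 addVV. Qed.

Lemma count_a (b b' : F2n k) : b' != b ->
  (#|{: V}| * #|[set a : {ffun 'I_k -> V} | lin a b' == lin a b]| = #|{ffun 'I_k -> V}|)%N.
Proof.
move=> nb.
have [i0 hi0] : exists i, b' i != b i.
  case/boolP: [exists i, b' i != b i] => [/existsP //| /existsPn h].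
  by case/eqP: nb; apply/ffunP => i; apply/eqP; move: (h i); rewrite negbK.
pose sa (a : {ffun 'I_k -> V}) := \sum_(i | b' i != b i) a i.
pose shift (v : V) (a : {ffun 'I_k -> V}) : {ffun 'I_k -> V} :=
  [ffun i => if i == i0 then a i + v else a i].
have hs : forall v a, sa (shift v a) = sa a + v.
  move=> v a; rewrite /sa (bigD1 i0) //= [in RHS](bigD1 i0) //= ffunE eqxx.
  rewrite addrAC; congr (_ + _); congr (_ + _); apply: eq_bigr => i /andP[_ hi].
  by rewrite ffunE (negbTE hi).
have shK : forall v, cancel (shift (- v)) (shift v).
  by move=> v a; apply/ffunP => i; rewrite !ffunE; case: (i == i0); rewrite ?subrK.
have eZ : forall v, [set a | sa a == v] = shift (- v) @^-1: [set a | sa a == 0].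
  by move=> v; apply/setP => a; rewrite !inE hs subr_eq0.
have cZ : forall v, #|[set a | sa a == v]| = #|[set a | sa a == 0]|.
  by move=> v; rewrite eZ card_preimset //; exact: can_inj (shK v).
have -> : [set a : {ffun 'I_k -> V} | lin a b' == lin a b] = [set a | sa a == 0].
  by apply/setP => a; rewrite !inE /sa -lin_xor addr_eq0 oppV.
rewrite -sum_nat_const -[RHS]sum1_card (partition_big sa xpredT) //=.
apply: eq_bigr => v _; rewrite -(cZ v) -sum1_card; apply: eq_bigl => a.
by rewrite inE.
Qed.

Definition hitset a u := [set b in B | (lin a b + u)%R \in P].
Definition mcol a b := #|[set b' in B | (b' != b) && (lin a b' == lin a b)]|.
Definition coll a u := (\sum_(b in B | (lin a b + u)%R \in P) mcol a b)%N.

Lemma hits_le a u : (#|hitset a u| <= #|Tset a u| + coll a u)%N.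
Proof.
rewrite /coll -!sum1_card big_mkcond [X in (_ <= X + _)%N]big_mkcond [X in (_ <= _ + X)%N]big_mkcond -big_split /=.
apply: leq_sum => b _; rewrite !inE.
case hB: (b \in B) => //=; case: ((lin a b + u)%R \in P) => //=.
case/boolP: (uniqB a b) => // hu /=.
move/forallPn: hu => [b']; rewrite negb_imply => /andP[hb'].
rewrite negb_imply => /andP[el nb].
suff : (0 < mcol a b)%N by [].
by apply/card_gt0P; exists b'; rewrite !inE hb' el nb.
Qed.

Lemma card_shift (v : V) : (\sum_(u : V) ((v + u)%R \in P) = #|P|)%N.
Proof.
rewrite -(card_preimset P (addrI v)) -sum1_card [RHS]big_mkcond.
by apply: eq_bigr => u _; rewrite inE.
Qed.

Lemma sum_hits a : (\sum_(u : V) #|hitset a u| = #|B| * #|P|)%N.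
Proof.
have e : forall u, #|hitset a u| = (\sum_(b in B) ((lin a b + u)%R \in P))%N.
  move=> u; rewrite -sum1_card big_mkcond [RHS]big_mkcond.
  by apply: eq_bigr => b _; rewrite inE; case: (b \in B); case: (_ \in P).
rewrite (eq_bigr _ (fun u _ => e u)) exchange_big /= -sum_nat_const.
by apply: eq_bigr => b _; exact: card_shift.
Qed.

Lemma sum_coll a : (\sum_(u : V) coll a u = #|P| * \sum_(b in B) mcol a b)%N.
Proof.
rewrite /coll (eq_bigr (fun u => \sum_(b in B) (if (lin a b + u)%R \in P then mcol a b else 0))%N); last by move=> u _; rewrite big_mkcondr.
rewrite exchange_big big_distrr /=; apply: eq_bigr => b _.
rewrite -big_mkcond /= sum_nat_const; congr (_ * _)%N.
rewrite -(card_preimset P (addrI (lin a b))); apply: eq_card => u.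
by rewrite inE.
Qed.

Lemma sum_mcol : (#|{: V}| * \sum_(a : {ffun 'I_k -> V}) \sum_(b in B) mcol a b
   <= #|B| * #|B| * #|{ffun 'I_k -> V}|)%N.
Proof.
rewrite exchange_big big_distrr /= -mulnA -sum_nat_const.
apply: leq_sum => b hb.
have e : forall a, mcol a b = (\sum_(b' in B | b' != b) (lin a b' == lin a b))%N.
  move=> a; rewrite /mcol -sum1_card big_mkcond [RHS]big_mkcond.
  by apply: eq_bigr => b' _; rewrite !inE; case: (b' \in B); case: (b' != b); case: (_ == _).
rewrite (eq_bigr _ (fun a _ => e a)) exchange_big big_distrr /= -sum_nat_const.
rewrite big_mkcondr /=; apply: leq_sum => b' _.
case: ifP => // nb; rewrite -(count_a nb) leq_pmul2l //.
rewrite -sum1_card [X in (_ <= X)%N]big_mkcond /=; apply: eq_leq; apply: eq_bigr => a _.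
  by rewrite inE; case: (_ == _).
by apply/card_gt0P; exists 0%R.
Qed.

Lemma main_count : (2 * #|B| <= #|{: V}|)%N ->
  exists a u, (#|P| * #|B| <= 2 * #|{: V}| * #|Tset a u|)%N.
Proof.
move=> hV.
pose I := ({ffun 'I_k -> V} * V)%type.
have [[a u] hp] := @avg_exists I ([ffun _ => 0], 0) (fun p : I => #|Tset p.1 p.2|).
exists a, u; move: hp => /=.
have eI : #|{: I}| = (#|{: {ffun 'I_k -> V}}| * #|{: V}|)%N by rewrite card_prod.
rewrite -(pair_big xpredT xpredT (fun a u => #|Tset a u|)) /= eI.
have hH : (\sum_(a : {ffun 'I_k -> V}) \sum_(u : V) #|hitset a u| <=
   \sum_(a : {ffun 'I_k -> V}) \sum_(u : V) #|Tset a u| + \sum_(a : {ffun 'I_k -> V}) \sum_(u : V) coll a u)%N.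
  rewrite -big_split; apply: leq_sum => a' _; rewrite -big_split; apply: leq_sum => u' _.
  exact: hits_le.
move: hH; rewrite (eq_bigr _ (fun a _ => sum_hits a)) (eq_bigr _ (fun a _ => sum_coll a)).
rewrite -big_distrr /= sum_nat_const.
have hM := sum_mcol.
move: hM.
set M := \sum_(a : {ffun 'I_k -> V}) \sum_(b in B) mcol a b.
set Tt := \sum_(a : {ffun 'I_k -> V}) \sum_(u : V) #|Tset a u|.
set nA := #|{: {ffun 'I_k -> V}}|.
rewrite -big_distrr /= -/M.
move: hV; set nV := #|{: V}|; set nB := #|B|; set nP := #|P|; set t := #|Tset a u|.
move=> hV hM hH hT.
have hA : (0 < nA)%N by apply/card_gt0P; exists a.
have h1 : (nV * (nB * (nA * nP)) <= nV * Tt + nP * (nB * nB * nA))%N.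
  have := leq_mul (leqnn nV) hH; rewrite mulnDr.
  move=> h; apply: (leq_trans h); rewrite leq_add2l mulnA (mulnC nV nP) -mulnA.
  by rewrite leq_mul2l hM orbT.
have h2' : (nP * (nB * nB * nA) * 2 <= nP * nB * nA * nV)%N.
  have := leq_mul (leqnn (nP * nB * nA)) hV.
  by rewrite !mulnA [X in (X <= _)%N -> _](_ : _ = nP * nB * nB * nA * 2)%N //; lia.
have h3 : (nV * (nB * (nA * nP)) <= 2 * (nV * Tt))%N by lia.
have h4 : (nV * (nB * (nA * nP)) <= 2 * (nV * (nA * nV * t)))%N.
  apply: (leq_trans h3); rewrite leq_mul2l /= leq_mul2l hT orbT //.
have : (nA * nV * (nP * nB) <= nA * nV * (2 * nV * t))%N.
  move: h4; rewrite [X in (_ <= X)%N -> _](_ : _ = nA * nV * (2 * nV * t))%N; last by lia.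
  by rewrite [X in (X <= _)%N -> _](_ : _ = nA * nV * (nP * nB))%N; last by lia.
rewrite leq_pmul2l //; rewrite muln_gt0 hA /=.
by apply/card_gt0P; exists 0%R.
Qed.

End Pair.

Definition xorf n (x t : F2n n) : F2n n := [ffun j => x j (+) t j].

Lemma xorfK n (x : F2n n) : cancel (xorf x) (xorf x).
Proof. by move=> t; apply/ffunP => j; rewrite !ffunE addKb. Qed.

Lemma xorfK' n (t : F2n n) : cancel (fun x : F2n n => xorf x t) (fun x => xorf x t).
Proof. by move=> x; apply/ffunP => j; rewrite !ffunE addbK. Qed.

Lemma dH_xor n (x y t : F2n n) : dH (xorf x t) (xorf y t) = dH x y.
Proof.
rewrite /dH; apply: eq_card => j; rewrite !inE !ffunE.
by case: (x j); case: (y j); case: (t j).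
Qed.

Lemma card_F2n n : #|{: F2n n}| = 2 ^ n.
Proof. by rewrite card_ffun card_bool card_ord. Qed.

Lemma trans_avg k n (S : {set F2n n}) :
  exists t, 2 ^ k * #|S| <= 2 ^ n * #|[set b : F2n k | xorf (phi n b) t \in S]|.
Proof.
have [t ht] := @avg_exists (F2n n) [ffun _ => false]
   (fun t => #|[set b : F2n k | xorf (phi n b) t \in S]|).
exists t; move: ht; rewrite card_F2n; apply: leq_trans.
have e : forall t, #|[set b : F2n k | xorf (phi n b) t \in S]| =
   \sum_(b : F2n k) (xorf (phi n b) t \in S).
  by move=> t'; rewrite -sum1_card big_mkcond; apply: eq_bigr => b _; rewrite inE.
rewrite (eq_bigr _ (fun t _ => e t)) exchange_big /= -card_F2n -sum_nat_const.
apply: eq_leq; apply: eq_bigr => b _.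
rewrite -(card_preimset S (can_inj (xorfK (phi n b)))) -sum1_card big_mkcond.
by apply: eq_bigr => t' _; rewrite inE.
Qed.

Lemma phi_dH_eq k n (b1 b2 b3 b4 : F2n k) : 2 ^ k - 1 <= n ->
  dH (phi n b1) (phi n b2) = dH (phi n b3) (phi n b4) ->
  forall i : 'I_k, (b1 i != b2 i) = (b3 i != b4 i).
Proof.
move=> hn; rewrite !dH_phi // => e i.
have := @wsum_inj k (fun i => bitn b1 i != bitn b2 i) (fun i => bitn b3 i != bitn b4 i) e i (ltn_ord i).
by rewrite !bitn_in.
Qed.

Lemma phi_inj k n : 2 ^ k - 1 <= n -> injective (@phi k n).
Proof.
move=> hn b b' e; apply/ffunP => i.
have := @phi_dH_eq k n b b' b b hn; rewrite e => /(_ erefl i).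
by rewrite eqxx => /negbFE/eqP.
Qed.

Lemma rainbow_img k n (T : {set F2n k}) t : 2 ^ k - 1 <= n -> sidon T ->
  rainbow [set xorf (phi n b) t | b in T].
Proof.
move=> hn hs.
apply/forallP => x; apply/implyP => /imsetP[b1 h1 ->].
apply/forallP => y; apply/implyP => /imsetP[b2 h2 ->].
apply/forallP => z; apply/implyP => /imsetP[b3 h3 ->].
apply/forallP => w; apply/implyP => /imsetP[b4 h4 ->].
apply/implyP => /andP[/andP[n12 n34] /eqP e].
rewrite !dH_xor in e.
have hb := phi_dH_eq hn e.
have n12' : b1 != b2 by apply: contraNneq n12 => ->.
have n34' : b3 != b4 by apply: contraNneq n34 => ->.
case: (hs b1 b2 b3 b4 h1 h2 h3 h4 n12' n34' hb) => [[-> ->]|[-> ->]] //.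
by rewrite setUC.
Qed.

Lemma core n (S : {set F2n n}) : exists N rr,
  2 ^ (trunc_log 2 n.+1) * #|S| <= 2 ^ n * N /\ N <= 32 * rr * rr /\ rr <= rho S.
Proof.
set k := trunc_log 2 n.+1.
have hk1 : 2 ^ k <= n.+1 by apply: trunc_logP.
have hn : 2 ^ k - 1 <= n by lia.
have [t ht] := @trans_avg k n S.
set B := [set b : F2n k | xorf (phi n b) t \in S] in ht.
set N := #|B| in ht.
exists N.
set r := (trunc_log 4 (2 * N - 1)).+1.
have hr4 : 2 * N <= 4 ^ r.
  have := @trunc_log_ltn 4 (2 * N - 1) isT; rewrite -/r; lia.
have hr8 : 0 < N -> 4 ^ r <= 8 * N.
  move=> hN; have h : 0 < 2 * N - 1 by lia.
  have := @trunc_logP 4 (2 * N - 1) isT h; rewrite /r expnS; lia.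
have [F hch hF] := @pPrimePowerField 2 r isT isT.
have h2 : (2%:R : F)%R = 0%R by apply: GRing.pcharf0.
have hV : #|{: (F * F)%type}| = 4 ^ r by rewrite card_prod hF -expnMn.
have [a [u hau]] := @main_count F h2 k B ltac:(by rewrite hV).
move: hau; rewrite card_P hF hV => hau.
set T := Tset B a u in hau.
exists #|T|; split => //; split.
  have h1 : N <= 2 * 2 ^ r * #|T|.
    have e4 : 4 ^ r = 2 ^ r * 2 ^ r by rewrite -expnMn.
    have : 2 ^ r * N <= 2 ^ r * (2 * 2 ^ r * #|T|).
      by apply: (leq_trans hau); rewrite e4; set x := 2 ^ r; set y := #|T|; apply: eq_leq; ring.
    by rewrite leq_pmul2l // expn_gt0.
  case: (posnP N) => [-> //|hN].
  have := hr8 hN; rewrite (_ : 4 ^ r = 2 ^ r * 2 ^ r); last by rewrite -expnMn.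
  move=> h8.
  have : N * N <= (2 * 2 ^ r * #|T|) * (2 * 2 ^ r * #|T|) by apply: leq_mul.
  move: h1 h8; set x := 2 ^ r; set y := #|T| => h1 h8 hsq.
  have : N * N <= N * (32 * y * y) by nia.
  by rewrite leq_pmul2l.
have hinj : injective (fun b : F2n k => xorf (phi n b) t).
  by move=> b b' e; apply: (@phi_inj k n hn); exact: (can_inj (xorfK' t) e).
rewrite -(card_imset T hinj).
apply: leq_bigmax_cond; apply/andP; split; last first.
  by apply: rainbow_img => //; exact: Tset_sidon.
apply/subsetP => x /imsetP[b hb ->].
by move: hb; rewrite !inE => /andP[].
Qed.

Unset Implicit Arguments.
From Stdlib Require Import Reals Lra.
Open Scope R_scope.


Lemma INR_pow2 (n : nat) : INR (expn 2 n) = 2 ^ n.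
Proof.
elim: n => [|n IH] //=.
by rewrite expnS -multE mult_INR IH.
Qed.

Lemma INR_mul (a b : nat) : INR (a * b)%nat = INR a * INR b.
Proof. by rewrite -multE mult_INR. Qed.

Lemma INR_leq {a b : nat} : leq a b -> INR a <= INR b.
Proof. by move/leP; apply: le_INR. Qed.

Theorem theorem1p6 :
  exists c : R, 0 < c /\
  forall (n : nat) (alpha : R) (S : {set F2n n}),
    0 <= alpha <= 1 ->
    INR #|S| >= alpha * 2 ^ n ->
    INR (rho S) >= c * sqrt alpha * sqrt (INR n).
Proof.
exists (1/8); split; first lra.
move=> n alpha S [ha0 ha1] hS.
have [N [rr [h1 [h2 h3]]]] := core S.
have hk : leq n.+1 (muln 2 (expn 2 (trunc_log 2 n.+1))).
  by rewrite -expnS; apply: ltnW; apply: trunc_log_ltn.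
move: h1 h2 h3 hk; set k := trunc_log 2 n.+1 => h1 h2 h3 hk.
have R1 := INR_leq h1; rewrite !INR_mul !INR_pow2 in R1.
have R2 := INR_leq h2; rewrite !INR_mul in R2.
have R3 := INR_leq h3.
have R4 := INR_leq hk; rewrite INR_mul INR_pow2 S_INR in R4.
have p2n : 0 < 2 ^ n by apply: pow_lt; lra.
have p2k : 0 < 2 ^ k by apply: pow_lt; lra.
have hN : alpha * 2 ^ k <= INR N.
  have : 2 ^ n * (alpha * 2 ^ k) <= 2 ^ n * INR N by nra.
  move=> h; apply: (Rmult_le_reg_l (2 ^ n)) => //.
have hrr0 : 0 <= INR rr by apply: pos_INR.
have hn0 : 0 <= INR n by apply: pos_INR.
have han : alpha * INR n <= 64 * (INR rr * INR rr).
  simpl in R2, R4.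
  have e2 : 1 + 1 = 2 by lra.
  have h4 : alpha * (INR n + 1) <= alpha * ((1 + 1) * 2 ^ k) by apply: Rmult_le_compat_l.
  nra.
rewrite Rmult_assoc -sqrt_mult //.
set s := sqrt (alpha * INR n).
have hs0 : 0 <= s by apply: sqrt_pos.
have hss : s * s = alpha * INR n by apply: sqrt_sqrt; nra.
nra.
Qed.
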